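(* Let $M_N$ satisfy Hypothesis (H) with parameter $(c,c')$ and let $\mathbf m=(m_\sigma)_{\sigma\in\mathfrak S_{2k}}$ in $(\mathcal A,\mathbb C\mathfrak S_k,\mathcal E)$ be the limit given by Theorem MainTh1, realized so that moreover $u_\eta m_\sigma u_{\eta'}^*=m_{(\eta\sqcup\eta')\sigma}$ in $\mathcal A$ for all $\sigma,\eta,\eta'$. Let $\phi(a)$ denote the coefficient of $u_{\mathrm{id}}$ in $\mathcal E(a)$. Set $$s_1=\frac{1}{\sqrt{(2k)!k!c}}\sum_{\sigma}m_\sigma,\quad s_2=\frac{1}{\sqrt{(2k)!k!c}}\sum_\sigma\mathrm{sg}(\sigma)m_\sigma,\quad s_3=\frac{1}{\sqrt{2(2k)!k!(c+\Re c')}}\sum_\sigma(m_\sigma+m_\sigma^* ),$$ the last one assuming $c+\Re c'>0$ (sums over $\sigma\in\mathfrak S_{2k}$, $\mathrm{sg}$ the signature). Then for every $\eta\in\mathfrak S_k$, $$\mathcal E(s_1u_\eta s_1^* )=\mathcal E(s_1^*u_\eta s_1)=\mathcal E(s_3u_\eta s_3)=\frac1{k!}\sum_{\eta'\in\mathfrak S_k}u_{\eta'},$$ $$\mathcal E(s_2u_\eta s_2^* )=\mathcal E(s_2^*u_\eta s_2)=\frac{\mathrm{sg}(\eta)}{k!}\sum_{\eta'\in\mathfrak S_k}\mathrm{sg}(\eta')u_{\eta'}.$$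
   Context: Fix $k\ge1$; $[n]=\{1,\dots,n\}$; $\mathfrak S_n$ is the symmetric group on $[n]$. Flattening: $M_{N,\sigma}((i_1,\dots,i_k),(i_{k+1},\dots,i_{2k}))=M_N(i_{\sigma(1)},\dots,i_{\sigma(2k)})$. Hypothesis (H) with parameter $(c,c')$: for each $N$ the entries of $M_N$ are i.i.d., distributed as a centered complex random variable $m_N$ with finite moments of all orders, and $N^k\mathbb E|m_N|^2\to c>0$, $N^k\mathbb E[m_N^2]\to c'\in\mathbb C$, and $N^k\mathbb E[m_N^{\ell_1}\overline{m_N}^{\ell_2}]\to0$ whenever $\ell_1+\ell_2>2$. $\mathbb C\mathfrak S_k$: group algebra with basis $(u_\eta)$, $u_\eta u_{\eta'}=u_{\eta\eta'}$, $u_\eta^*=u_{\eta^{-1}}$. $(\mathcal A,\mathbb C\mathfrak S_k,\mathcal E)$: unital $*$-algebra containing $\mathbb C\mathfrak S_k$, with $\mathcal E:\mathcal A\to\mathbb C\mathfrak S_k$ unital, completely positive, $\mathcal E(bab')=b\mathcal E(a)b'$. For $\eta,\eta'\in\mathfrak S_k$, $\eta\sqcup\eta'\in\mathfrak S_{2k}$ is $i\mapsto\eta(i)$ for $i\in[k]$, $i\mapsto\eta'(i-k)+k$ otherwise; $\tau\in\mathfrak S_{2k}$ swaps $i\leftrightarrow i+k$. Theorem MainTh1 provides a centered $\mathfrak S_k$-circular family $(m_\sigma)$, limit in $\mathfrak S_k^*$-distribution of the flattenings, with $\mathcal E(m_\sigma u_\eta m_{\sigma'}^* )=c\,u_{\eta'}$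 if $\sigma=(\eta'\sqcup\eta)\sigma'$ and $0$ if no such $\eta'$ exists; $\mathcal E(m_\sigma^*u_\eta m_{\sigma'})=c\,u_{\eta'}$ if $\sigma=(\eta\sqcup\eta')\sigma'$, else $0$; $\mathcal E(m_\sigma u_\eta m_{\sigma'})=c'u_{\eta'}$ if $\sigma=\tau(\eta\sqcup\eta')\sigma'$, else $0$. *)

(* Defs.v *)
From HB Require Import structures.
From mathcomp Require Import all_boot all_order all_fingroup all_algebra.
Set Implicit Arguments. Unset Strict Implicit. Unset Printing Implicit Defensive.
Import GRing.Theory Num.Theory.
Local Open Scope ring_scope.

(* Composition of permutations in the usual functional convention:
   (compp s t) x = s (t x).  (mathcomp's s * t applies s first.) *)
Definition compp (T : finType) (s t : {perm T}) : {perm T} := (t * s)%g.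

Lemma comppE (T : finType) (s t : {perm T}) x : compp s t x = s (t x).
Proof. by rewrite /compp permM. Qed.

Definition sqcup_fun k (e e' : 'S_k) (i : 'I_(k + k)) : 'I_(k + k) :=
  match split i with
  | inl j => lshift k (e j)
  | inr j => rshift k (e' j)
  end.

Lemma sqcup_fun_inj k (e e' : 'S_k) : injective (sqcup_fun e e').
Proof.
move=> i j; rewrite /sqcup_fun.
case: splitP => a Ha; case: splitP => b Hb => /(congr1 val) /= H;
  apply/val_inj; rewrite /= Ha Hb.
- by rewrite (perm_inj (val_inj H)).
- by move: (ltn_ord (e a)); rewrite H -ltn_subRL subnn.
- by move: (ltn_ord (e b)); rewrite -H -ltn_subRL subnn.
- by move/addnI: H => /val_inj/perm_inj ->.
Qed.

Definition sqcup k (e e' : 'S_k) : 'S_(k + k) := perm (@sqcup_fun_inj k e e').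

Definition tau_fun k (i : 'I_(k + k)) : 'I_(k + k) :=
  match split i with
  | inl j => rshift k j
  | inr j => lshift k j
  end.

Lemma tau_fun_inj k : injective (@tau_fun k).
Proof.
move=> i j; rewrite /tau_fun.
case: splitP => a Ha; case: splitP => b Hb => /(congr1 val) /= H;
  apply/val_inj; rewrite /= Ha Hb.
- by move/addnI: H => ->.
- by move: (ltn_ord b); rewrite -H -ltn_subRL subnn.
- by move: (ltn_ord a); rewrite H -ltn_subRL subnn.
- by rewrite H.
Qed.

Definition tau k : 'S_(k + k) := perm (@tau_fun_inj k).

Definition sg (R : pzRingType) (T : finType) (s : {perm T}) : R := (-1) ^+ odd_perm s.

Definition inCS (C : fieldType) (A : lalgType C) k (u : 'S_k -> A) (b : A) : Prop :=
  exists f : 'S_k -> C, b = \sum_(e : 'S_k) f e *: u e.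

Definition star_algebra (C : numClosedFieldType) (A : algType C) (star : A -> A) : Prop :=
  [/\ forall a b, star (a + b) = star a + star b,
      forall (l : C) a, star (l *: a) = Num.conj l *: star a,
      forall a b, star (a * b) = star b * star a,
      forall a, star (star a) = a &
      star 1 = 1].

Definition group_algebra_embedding (C : numClosedFieldType) (A : algType C)
    (star : A -> A) k (u : 'S_k -> A) : Prop :=
  [/\ u 1%g = 1,
      forall e e', u (compp e e') = u e * u e',
      forall e, star (u e) = u (e^-1)%g &
      forall f : 'S_k -> C, \sum_(e : 'S_k) f e *: u e = 0 -> forall e, f e = 0].

Definition cond_expectation (C : numClosedFieldType) (A : algType C)
    (star : A -> A) k (u : 'S_k -> A) (E : A -> A) : Prop :=
  [/\ (forall a b, E (a + b) = E a + E b) /\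
        (forall (l : C) a, E (l *: a) = l *: E a),
      E 1 = 1,
      forall a, inCS u (E a),
      forall a, E (star a) = star (E a) &
      forall b a b', inCS u b -> inCS u b' -> E (b * a * b') = b * E a * b'].

(* Main.v *)
Require Import Defs.
From HB Require Import structures.
From mathcomp Require Import all_boot all_order all_fingroup all_algebra.
Set Warnings "-all".
Import GRing.Theory Num.Theory.
Local Open Scope ring_scope.

Lemma split_l k (j : 'I_k) : split (lshift k j) = inl j.
Proof. exact: (unsplitK (inl j)). Qed.
Lemma split_r k (j : 'I_k) : split (rshift k j) = inr j.
Proof. exact: (unsplitK (inr j)). Qed.

Lemma sqcupL k (a b : 'S_k) j : sqcup a b (lshift k j) = lshift k (a j).
Proof. by rewrite permE /sqcup_fun split_l. Qed.
Lemma sqcupR k (a b : 'S_k) j : sqcup a b (rshift k j) = rshift k (b j).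
Proof. by rewrite permE /sqcup_fun split_r. Qed.

Lemma eq_split k (f g : 'S_(k + k)) :
  (forall j, f (lshift k j) = g (lshift k j)) ->
  (forall j, f (rshift k j) = g (rshift k j)) -> f = g.
Proof.
move=> HL HR; apply/permP => i; rewrite -(splitK i).
by case: (split i) => j /=.
Qed.

Lemma sqcupM k (a b a' b' : 'S_k) :
  sqcup (a * a')%g (b * b')%g = (sqcup a b * sqcup a' b')%g.
Proof.
by apply: eq_split => j; rewrite permM ?sqcupL ?sqcupR permM.
Qed.

Lemma sqcup1 k : sqcup (1%g : 'S_k) 1%g = 1%g.
Proof. by apply: eq_split => j; rewrite ?sqcupL ?sqcupR !perm1. Qed.

Lemma sqcupML k (a a' : 'S_k) : sqcup (a * a')%g 1 = (sqcup a 1 * sqcup a' 1)%g.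
Proof. by rewrite -sqcupM mulg1. Qed.
Lemma sqcupMR k (a a' : 'S_k) : sqcup 1 (a * a')%g = (sqcup 1 a * sqcup 1 a')%g.
Proof. by rewrite -sqcupM mulg1. Qed.

Lemma sqcup_tpermL k (x y : 'I_k) :
  sqcup (tperm x y) 1 = tperm (lshift k x) (lshift k y).
Proof.
apply: eq_split => j; rewrite ?sqcupL ?sqcupR ?perm1 !permE /=.
  by rewrite !(inj_eq (@lshift_inj _ _)); case: ifP => //; case: ifP.
have h z : (rshift k j == lshift k z) = false.
  apply/negbTE/eqP => /(congr1 val) /= H.
  by move: (ltn_ord z); rewrite -H -ltn_subRL subnn.
by rewrite !h.
Qed.

Lemma sqcup_tpermR k (x y : 'I_k) :
  sqcup 1 (tperm x y) = tperm (rshift k x) (rshift k y).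
Proof.
apply: eq_split => j; rewrite ?sqcupL ?sqcupR ?perm1 !permE /=.
  have h z : (lshift k j == rshift k z) = false.
    apply/negbTE/eqP => /(congr1 val) /= H.
    by move: (ltn_ord j); rewrite H -ltn_subRL subnn.
  by rewrite !h.
by rewrite !(inj_eq (@rshift_inj _ _)); case: ifP => //; case: ifP.
Qed.

Lemma odd_sqcupL k (a : 'S_k) : odd_perm (sqcup a 1) = odd_perm a.
Proof.
have [ts -> _] := prod_tpermP a.
elim: ts => [|t ts IH]; first by rewrite !big_nil sqcup1 !odd_perm1.
rewrite !big_cons sqcupML !odd_permM IH sqcup_tpermL !odd_tperm.
by rewrite (inj_eq (@lshift_inj _ _)).
Qed.

Lemma odd_sqcupR k (a : 'S_k) : odd_perm (sqcup 1 a) = odd_perm a.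
Proof.
have [ts -> _] := prod_tpermP a.
elim: ts => [|t ts IH]; first by rewrite !big_nil sqcup1 !odd_perm1.
rewrite !big_cons sqcupMR !odd_permM IH sqcup_tpermR !odd_tperm.
by rewrite (inj_eq (@rshift_inj _ _)).
Qed.

Lemma odd_sqcup k (a b : 'S_k) : odd_perm (sqcup a b) = odd_perm a (+) odd_perm b.
Proof.
by rewrite -{1}(mulg1 a) -{1}(mul1g b) sqcupM odd_permM odd_sqcupL odd_sqcupR.
Qed.

Lemma sqcup_injL k (b a a' : 'S_k) : sqcup a b = sqcup a' b -> a = a'.
Proof.
move=> H; apply/permP => j; apply: (@lshift_inj k k).
by rewrite -(@sqcupL k a b) -(@sqcupL k a' b) H.
Qed.
Lemma sqcup_injR k (a b b' : 'S_k) : sqcup a b = sqcup a b' -> b = b'.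
Proof.
move=> H; apply/permP => j; apply: (@rshift_inj k k).
by rewrite -(@sqcupR k a b) -(@sqcupR k a b') H.
Qed.

Lemma sum_match (I J : finType) (V : zmodType) (h : J -> I) (f : I -> V) (v : J -> V) :
  injective h ->
  (forall s, (forall e, s = h e -> f s = v e) /\ ((forall e, s <> h e) -> f s = 0)) ->
  \sum_s f s = \sum_e v e.
Proof.
move=> hinj Hf.
transitivity (\sum_s \sum_e (if s == h e then v e else 0)).
  apply: eq_bigr => s _; have [Hf1 Hf2] := Hf s.
  case: (pickP (fun e => s == h e)) => [e /eqP He | Hn].
    subst s; rewrite (bigD1 e) //= eqxx big1 ?addr0; first by rewrite (Hf1 e erefl).
    by move=> e' ne; rewrite (inj_eq hinj) eq_sym (negbTE ne).
  rewrite Hf2 ?big1 // => [e _|e /eqP]; by rewrite Hn.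
rewrite exchange_big; apply: eq_bigr => e _.
by rewrite -big_mkcond big_pred1_eq.
Qed.

Lemma compp_injL k (s' : 'S_k) : injective (fun x => compp x s').
Proof. by move=> x y /= H; apply: (mulgI s'); exact: H. Qed.

Lemma compp_injR k (a : 'S_k) : injective (fun x => compp a x).
Proof. by move=> x y /= H; apply: (mulIg a); exact: H. Qed.

Lemma sqcup_inj1 k (e : 'S_k) : injective (fun x => sqcup x e).
Proof. by move=> x y /sqcup_injL. Qed.
Lemma sqcup_inj2 k (e : 'S_k) : injective (fun x => sqcup e x).
Proof. by move=> x y /sqcup_injR. Qed.

Lemma sgM (C : pzRingType) k (a b : 'S_k) : sg C (compp a b) = sg C a * sg C b.
Proof.
rewrite /sg /compp odd_permM signr_addb.
by case: (odd_perm a); case: (odd_perm b); rewrite /= ?expr0 ?expr1 ?mulr1 ?mul1r.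
Qed.
Lemma sg_sqcup (C : pzRingType) k (a b : 'S_k) : sg C (sqcup a b) = sg C a * sg C b.
Proof. by rewrite /sg odd_sqcup signr_addb. Qed.
Lemma sgK (C : pzRingType) k (a : 'S_k) : sg C a * sg C a = 1.
Proof. by rewrite /sg; case: odd_perm; rewrite ?mulr1 ?mulrNN ?mulr1. Qed.

Lemma mul_sums (R : pzRingType) (I : finType) (f g : I -> R) x :
  (\sum_s f s) * x * (\sum_s g s) = \sum_s \sum_t f s * x * g t.
Proof.
rewrite mulr_suml mulr_suml; apply: eq_bigr => s _; by rewrite mulr_sumr.
Qed.

Lemma sum_const_perm (V : zmodType) n (x : V) :
  \sum_(s : 'S_n) x = x *+ n`!.
Proof. by rewrite sumr_const card_Sn. Qed.

From mathcomp Require Import ring.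

Lemma scal1 (R : comRingType) (a b x y : R) : x * x = 1 -> a * b * x * x * y = b * y * a.
Proof. move=> h; have -> : a*b*x*x*y = (x*x)*(b*y*a) by ring. by rewrite h mul1r. Qed.

Lemma scal2 (R : comRingType) (a b x y : R) : x * x = 1 -> a * b * x * x * y = a * y * b.
Proof. move=> h; have -> : a*b*x*x*y = (x*x)*(a*y*b) by ring. by rewrite h mul1r. Qed.

Theorem mainTheorem13
  (C : numClosedFieldType) (A : algType C) (star : A -> A)
  (k : nat) (u : 'S_k -> A) (E : A -> A)
  (c c' : C) (m : 'S_(k + k) -> A)
  (Hstar : star_algebra star)
  (Hu : group_algebra_embedding star u)
  (HE : cond_expectation star u E)
  (Hc : 0 < c)
  (Hcent : forall s, E (m s) = 0)
  (Hcov1 : forall (s s' : 'S_(k + k)) (e : 'S_k),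
      (forall e' : 'S_k, s = compp (sqcup e' e) s' ->
          E (m s * u e * star (m s')) = c *: u e') /\
      ((forall e' : 'S_k, s <> compp (sqcup e' e) s') ->
          E (m s * u e * star (m s')) = 0))
  (Hcov2 : forall (s s' : 'S_(k + k)) (e : 'S_k),
      (forall e' : 'S_k, s = compp (sqcup e e') s' ->
          E (star (m s) * u e * m s') = c *: u e') /\
      ((forall e' : 'S_k, s <> compp (sqcup e e') s') ->
          E (star (m s) * u e * m s') = 0))
  (Hcov3 : forall (s s' : 'S_(k + k)) (e : 'S_k),
      (forall e' : 'S_k, s = compp (tau k) (compp (sqcup e e') s') ->
          E (m s * u e * m s') = c' *: u e') /\
      ((forall e' : 'S_k, s <> compp (tau k) (compp (sqcup e e') s')) ->
          E (m s * u e * m s') = 0))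
  (Hequiv : forall (s : 'S_(k + k)) (e e' : 'S_k),
      u e * m s * star (u e') = m (compp (sqcup e e') s)) :
  let N : C := ((k + k)`! * k`!)%:R in
  let s1 := (sqrtC (N * c))^-1 *: \sum_(s : 'S_(k + k)) m s in
  let s2 := (sqrtC (N * c))^-1 *: \sum_(s : 'S_(k + k)) (sg C s *: m s) in
  let s3 := (sqrtC (2 * N * (c + 'Re c')))^-1 *:
              \sum_(s : 'S_(k + k)) (m s + star (m s)) in
  let U := (k`!%:R : C)^-1 *: \sum_(e' : 'S_k) u e' in
  forall e : 'S_k,
    [/\ E (s1 * u e * star s1) = U,
        E (star s1 * u e * s1) = U,
        (0 < c + 'Re c' -> E (s3 * u e * s3) = U),
        E (s2 * u e * star s2) =
          (sg C e / k`!%:R) *: \sum_(e' : 'S_k) (sg C e' *: u e') &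
        E (star s2 * u e * s2) =
          (sg C e / k`!%:R) *: \sum_(e' : 'S_k) (sg C e' *: u e')].
Proof.
move=> N s1 s2 s3 U e.
have [[Eadd Escal] _ _ Estar _] := HE.
have [sadd sscal smul sinv _] := Hstar.
have [_ _ ustar _] := Hu.
have E0 : E 0 = 0.
  by apply/(addrI (E 0)); rewrite addr0 -Eadd addr0.
have st0 : star 0 = 0.
  by apply/(addrI (star 0)); rewrite addr0 -sadd addr0.
have Esum := big_morph E Eadd E0.
have ssum := big_morph star sadd st0.
have ESc2 : forall (a b : C) X Y, E ((a *: X) * u e * (b *: Y)) = (a * b) *: E (X * u e * Y).
  by move=> a b X Y; rewrite -!scalerAl -scalerAr scalerA Escal.
have F2 : ((k + k)`!%:R : C) != 0 by rewrite pnatr_eq0 -lt0n fact_gt0.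
have F1 : ((k`!)%:R : C) != 0 by rewrite pnatr_eq0 -lt0n fact_gt0.
have c0 : c != 0 by rewrite lt0r_neq0.
have key1 : forall e, \sum_s \sum_s' E (m s * u e * star (m s')) =
    (k+k)`!%:R *: (c *: \sum_e' u e').
  move=> e0; rewrite exchange_big /= (eq_bigr (fun _ => c *: \sum_e' u e')).
    by rewrite sum_const_perm scaler_nat.
  move=> s' _; rewrite scaler_sumr.
  apply: (@sum_match _ _ _ (fun e' => compp (sqcup e' e0) s')).
    by move=> x y /compp_injL /sqcup_inj1.
  by move=> s; exact: Hcov1 s s' e0.
have key2 : forall e, \sum_s \sum_s' E (star (m s) * u e * m s') =
    (k+k)`!%:R *: (c *: \sum_e' u e').
  move=> e0; rewrite exchange_big /= (eq_bigr (fun _ => c *: \sum_e' u e')).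
    by rewrite sum_const_perm scaler_nat.
  move=> s' _; rewrite scaler_sumr.
  apply: (@sum_match _ _ _ (fun e' => compp (sqcup e0 e') s')).
    by move=> x y /compp_injL /sqcup_inj2.
  by move=> s; exact: Hcov2 s s' e0.
have key3 : forall e, \sum_s \sum_s' E (m s * u e * m s') =
    (k+k)`!%:R *: (c' *: \sum_e' u e').
  move=> e0; rewrite exchange_big /= (eq_bigr (fun _ => c' *: \sum_e' u e')).
    by rewrite sum_const_perm scaler_nat.
  move=> s' _; rewrite scaler_sumr.
  apply: (@sum_match _ _ _ (fun e' => compp (tau k) (compp (sqcup e0 e') s'))).
    by move=> x y /compp_injR /compp_injL /sqcup_inj2.
  by move=> s; exact: Hcov3 s s' e0.
have csg : forall n (x : 'S_n), Num.conj (sg C x) = sg C x.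
  by move=> n x; rewrite /sg rmorph_sign.
have sgK' : forall x : 'S_(k+k), sg C x * sg C x = 1 by move=> x; apply: sgK.
have key1s : forall e, \sum_s \sum_s' ((sg C s * sg C s') *: E (m s * u e * star (m s'))) =
    (k+k)`!%:R *: ((sg C e * c) *: \sum_e' (sg C e' *: u e')).
  move=> e0; rewrite exchange_big /=
    (eq_bigr (fun _ => (sg C e0 * c) *: \sum_e' (sg C e' *: u e'))).
    by rewrite sum_const_perm scaler_nat.
  move=> s' _; rewrite scaler_sumr.
  apply: (@sum_match _ _ _ (fun e' => compp (sqcup e' e0) s')).
    by move=> x y /compp_injL /sqcup_inj1.
  move=> s; have [h1 h2] := Hcov1 s s' e0; split => [e' Hs|Hn].
    rewrite (h1 e' Hs) Hs sgM sg_sqcup !scalerA; congr (_ *: _).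
    by rewrite (@scal1 _ _ _ _ _ (sgK' s')).
  by rewrite h2 // scaler0.
have key2s : forall e, \sum_s \sum_s' ((sg C s * sg C s') *: E (star (m s) * u e * m s')) =
    (k+k)`!%:R *: ((sg C e * c) *: \sum_e' (sg C e' *: u e')).
  move=> e0; rewrite exchange_big /=
    (eq_bigr (fun _ => (sg C e0 * c) *: \sum_e' (sg C e' *: u e'))).
    by rewrite sum_const_perm scaler_nat.
  move=> s' _; rewrite scaler_sumr.
  apply: (@sum_match _ _ _ (fun e' => compp (sqcup e0 e') s')).
    by move=> x y /compp_injL /sqcup_inj2.
  move=> s; have [h1 h2] := Hcov2 s s' e0; split => [e' Hs|Hn].
    rewrite (h1 e' Hs) Hs sgM sg_sqcup !scalerA; congr (_ *: _).
    by rewrite (@scal2 _ _ _ _ _ (sgK' s')).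
  by rewrite h2 // scaler0.
have KK : forall x : C, 0 <= x -> (sqrtC x)^-1 * Num.conj ((sqrtC x)^-1) = x^-1.
  move=> x hx; rewrite geC0_conj ?invr_ge0 ?sqrtC_ge0 //.
  by rewrite -expr2 exprVn sqrtCK.
have KK' : forall x : C, 0 <= x -> Num.conj ((sqrtC x)^-1) * (sqrtC x)^-1 = x^-1.
  by move=> x hx; rewrite mulrC KK.
have N0 : 0 <= N * c by rewrite /N; apply: mulr_ge0; [exact: ler0n | exact: Order.POrderTheory.ltW].
split.
- rewrite /s1 sscal ssum ESc2 mul_sums Esum.
  under eq_bigr => s _ do rewrite Esum.
  rewrite key1 /U !scalerA; congr (_ *: _).
  rewrite KK // /N natrM; field.
  by rewrite F1 F2 c0.
- rewrite /s1 sscal ssum ESc2 mul_sums Esum.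
  under eq_bigr => s _ do rewrite Esum.
  rewrite key2 /U !scalerA; congr (_ *: _).
  rewrite KK' // /N natrM; field.
  by rewrite F1 F2 c0.
- move=> hpos.
  have two0 : (2 : C) != 0 by rewrite pnatr_eq0.
  have hconj : Num.conj c' = 2 * 'Re c' - c'.
    by rewrite ReE; field.
  have E4eq : forall s s', E (star (m s) * u e * star (m s')) =
      star (E (m s' * u (e^-1)%g * m s)).
    by move=> s s'; rewrite -Estar !smul ustar invgK mulrA.
  have key4 : \sum_s \sum_s' star (E (m s' * u (e^-1)%g * m s)) =
      star ((k+k)`!%:R *: (c' *: \sum_e' u e')).
    rewrite -(key3 (e^-1)%g) ssum exchange_big; apply: eq_bigr => s _; by rewrite ssum.
  have sinvU : \sum_e' star (u e') = \sum_e' u e'.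
    under eq_bigr do rewrite ustar.
    rewrite (reindex_inj invg_inj) /=.
    by under eq_bigr do rewrite invgK.
  rewrite /s3 ESc2 mul_sums Esum.
  under eq_bigr => s _ do rewrite Esum.
  under eq_bigr => s _ do under eq_bigr => s' _ do rewrite !mulrDl !mulrDr !Eadd E4eq.
  under eq_bigr => s _ do rewrite !big_split.
  rewrite !big_split /= key1 key2 key3 key4 !sscal ssum sinvU rmorph_nat hconj.
  rewrite /U !scalerA -!scalerDl scalerA; congr (_ *: _).
  have -> : forall y : C, (sqrtC y)^-1 * (sqrtC y)^-1 = y^-1.
    by move=> y; rewrite -expr2 exprVn sqrtCK.
  have cr0 : c + 'Re c' != 0 by rewrite lt0r_neq0.
  rewrite /N natrM; field.
  by rewrite F1 F2 cr0.
- rewrite /s2 sscal ssum.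
  under eq_bigr => s _ do rewrite sscal csg.
  rewrite ESc2 mul_sums Esum.
  under eq_bigr => s _ do rewrite Esum.
  under eq_bigr => s _ do under eq_bigr => s' _ do rewrite ESc2.
  rewrite key1s !scalerA; congr (_ *: _).
  rewrite KK // /N natrM; field.
  by rewrite F1 F2 c0.
- rewrite /s2 sscal ssum.
  under eq_bigr => s _ do rewrite sscal csg.
  rewrite ESc2 mul_sums Esum.
  under eq_bigr => s _ do rewrite Esum.
  under eq_bigr => s _ do under eq_bigr => s' _ do rewrite ESc2.
  rewrite key2s !scalerA; congr (_ *: _).
  rewrite KK' // /N natrM; field.
  by rewrite F1 F2 c0.
Qed.
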